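(* Let $R$ be a commutative ring, $M$ an $R$-module, and $a\in M^{{\mathbb N}}$ an $R$-recurrence sequence of order $d$. If $a(k)=a(k+m)=a(k+2m)=\cdots=a(k+(d-1)m)=0$ for some $k\in{\mathbb N}$ and some positive integer $m$, then $a(k+im)=0$ for all $i\in{\mathbb N}$.
   Context: ${\mathbb N}=\{0,1,2,\dots\}$. $a\in M^{{\mathbb N}}$ is an $R$-recurrence sequence of order $d$ if $d$ is the smallest integer $\ge0$ for which there are $\gamma_0,\dots,\gamma_{d-1}\in R$ with $a(n+d)=\gamma_{d-1}a(n+d-1)+\cdots+\gamma_0a(n)$ for all $n\in{\mathbb N}$. *)

(* Defs.v *)
From mathcomp Require Import all_boot all_order all_algebra.
Set Implicit Arguments. Unset Strict Implicit. Unset Printing Implicit Defensive.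
Import GRing.Theory.
Local Open Scope ring_scope.

Definition satisfies_rec (R : comPzRingType) (M : lmodType R) (a : nat -> M)
  (d : nat) : Prop :=
  exists g : 'I_d -> R, forall n : nat,
    a (n + d)%N = \sum_(i < d) g i *: a (n + i)%N.

Definition is_rec_seq_of_order (R : comPzRingType) (M : lmodType R)
  (a : nat -> M) (d : nat) : Prop :=
  satisfies_rec a d /\ forall d' : nat, satisfies_rec a d' -> (d <= d')%N.

(* Main.v *)
Require Import Defs.
From HB Require Import structures.
From mathcomp Require Import all_boot all_order all_algebra.
Set Implicit Arguments. Unset Strict Implicit. Unset Printing Implicit Defensive.
Import GRing.Theory.
Local Open Scope ring_scope.

Lemma CH_nz (R : comNzRingType) n (B : 'M[R]_n.+1) :
  exists c : 'I_n.+1 -> R, B ^+ n.+1 = \sum_(j < n.+1) c j *: B ^+ j.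
Proof.
have H := Cayley_Hamilton B.
set p := char_poly B in H.
have sz : size p = n.+2 by rewrite size_char_poly.
have mo : p`_n.+1 = 1.
  by have /monicP := char_poly_monic B; rewrite /lead_coef sz.
have H' : horner_mx B (\sum_(i < n.+2) p`_i *: 'X^i) = 0.
  by rewrite -poly_def -sz coefK.
exists (fun j => - p`_j).
move: H'; rewrite rmorph_sum big_ord_recr /= mo horner_mxZ scale1r.
rewrite rmorphXn /= horner_mx_X => /eqP; rewrite addrC addr_eq0.
move=> /eqP ->; rewrite -sumrN; apply: eq_bigr => j _.
by rewrite horner_mxZ rmorphXn /= horner_mx_X scaleNr.
Qed.



Section NZ.
Variable R : comPzRingType.
Variable H : (1:R) != 0.
Definition nzR (_ : (1:R) != 0) : Type := R.
HB.instance Definition _ := GRing.ComPzRing.on (nzR H).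
HB.instance Definition _ := GRing.PzSemiRing_isNonZero.Build (nzR H) H.
End NZ.

Lemma CH_pz (R : comPzRingType) (H : (1:R) != 0) n (B : 'M[R]_n.+1) :
  exists c : 'I_n.+1 -> R, B ^+ n.+1 = \sum_(j < n.+1) c j *: B ^+ j.
Proof. have [c hc] := @CH_nz (@nzR R H) n B. by exists c. Qed.

Section Main.
Variables (R : comPzRingType) (M : lmodType R) (a : nat -> M) (d : nat).
Variable g : 'I_d.+1 -> R.
Hypothesis rec : forall n : nat, a (n + d.+1)%N = \sum_(i < d.+1) g i *: a (n + i)%N.

Definition Cm : 'M[R]_d.+1 :=
  \matrix_(i, j) if (i.+1 < d.+1)%N then ((j : nat) == i.+1)%:R else g j.

Lemma L0 n (l : 'I_d.+1) : \sum_j Cm l j *: a (n + j)%N = a (n + l.+1)%N.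
Proof.
case: (ltnP l.+1 d.+1) => hl.
  rewrite (bigD1 (Ordinal hl)) //= big1.
    by rewrite mxE hl eqxx scale1r addr0.
  move=> j hj.
  rewrite mxE hl; case: eqP => [e|]; last by rewrite scale0r.
  by case/eqP: hj; apply: val_inj.
have -> : l.+1 = d.+1 by apply/eqP; rewrite eqn_leq hl (ltn_ord l).
rewrite rec; apply: eq_bigr => j _.
by rewrite mxE ltnNge hl.
Qed.

Lemma Lt t : forall n (i : 'I_d.+1),
  a (n + i + t)%N = \sum_j (Cm ^+ t) i j *: a (n + j)%N.
Proof.
elim: t => [|t IH] n i.
  rewrite expr0 addn0 (bigD1 i) //= big1.
    by rewrite mxE eqxx scale1r addr0.
  move=> j hj; by rewrite mxE eq_sym (negPf hj) mulr0n scale0r.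
rewrite exprSr.
have -> : (n + i + t.+1 = n.+1 + i + t)%N by rewrite addnS addSn.
rewrite IH.
transitivity (\sum_l (Cm ^+ t) i l *: \sum_j Cm l j *: a (n + j)%N).
  by apply: eq_bigr => l _; rewrite L0 addnS addSn.
under eq_bigr do rewrite scaler_sumr.
rewrite exchange_big /=; apply: eq_bigr => j _.
rewrite -mulmxE mxE scaler_suml; apply: eq_bigr => l _.
by rewrite scalerA.
Qed.

Lemma step (m : nat) (c : 'I_d.+1 -> R)
  (hc : (Cm ^+ m) ^+ d.+1 = \sum_j c j *: (Cm ^+ m) ^+ j) n :
  a (n + d.+1 * m)%N = \sum_j c j *: a (n + j * m)%N.
Proof.
have := Lt (d.+1 * m) n ord0; rewrite addn0 => ->.
rewrite mulnC exprM hc.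
transitivity (\sum_l \sum_j (c j * ((Cm ^+ m) ^+ j) ord0 l) *: a (n + l)%N).
  apply: eq_bigr => l _; rewrite summxE scaler_suml; apply: eq_bigr => j _.
  by rewrite mxE.
rewrite exchange_big /=; apply: eq_bigr => j _.
have := Lt (j * m) n ord0; rewrite addn0 => ->.
rewrite scaler_sumr; apply: eq_bigr => l _.
by rewrite -scalerA mulnC exprM.
Qed.
End Main.

Theorem corollary2p2 (R : comPzRingType) (M : lmodType R) (a : nat -> M)
  (d : nat) (k m : nat) :
  is_rec_seq_of_order a d -> (0 < m)%N ->
  (forall j : nat, (j < d)%N -> a (k + j * m)%N = 0) ->
  forall i : nat, a (k + i * m)%N = 0.
Proof.
move=> [[g rec] _] _ hz.
have [H1|H1] := eqVneq (1 : R) 0.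
  by move=> i; rewrite -[a _]scale1r H1 scale0r.
case: d g rec hz => [|d] g rec hz.
  by move=> i; rewrite -[(k + i * m)%N]addn0 rec big_ord0.
have [c hc] := CH_pz H1 (Cm g ^+ m).
elim/ltn_ind => i IH.
case: (ltnP i d.+1) => hi; first exact: hz.
have -> : (k + i * m = (k + (i - d.+1) * m) + d.+1 * m)%N.
  by rewrite -addnA -mulnDl subnK.
rewrite (step rec hc); apply: big1 => j _.
rewrite -addnA -mulnDl IH ?scaler0 //.
by rewrite -{2}(subnK hi) ltn_add2l.
Qed.
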